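(* Assume $X_t>0$ and $Y_t>0$ for all $t\in\mathcal T$, let $\alpha=\sum_{t}Y_t/X_t$, and for $\delta\in[0,1]$ and a probability vector $\boldsymbol p$ on $\mathcal T$ let $\mathrm{UB}(\delta,\boldsymbol p)=1-\delta+\frac{\delta^2}{2}\sum_tp_t^2\frac{X_t}{Y_t}$. Then $$\min_{\delta\in[0,1],\ \boldsymbol p\in\Delta(\mathcal T)}\mathrm{UB}(\delta,\boldsymbol p)=L(\alpha),$$ attained at $p_t=\frac{Y_t/X_t}{\alpha}$ and $\delta=\min\{\alpha,1\}$. Consequently, in the weakest-link game, any strategy $F^*_{\mathcal Y}\in\mathbb F(\boldsymbol Y)$ whose $c$-marginals are, for all $c$ and $\boldsymbol u\in\mathbb R^T_{\ge0}$, $F^*_{\mathcal Y,c}(\boldsymbol u)=1-\alpha+\alpha\sum_t\frac{Y_t/X_t}{\alpha}\min\{\frac{u_t}{2v_cX_t},1\}$ if $\alpha\le1$, and $F^*_{\mathcal Y,c}(\boldsymbol u)=\sum_t\frac{Y_t/X_t}{\alpha}\min\{\frac{u_t}{2v_cX_t\alpha},1\}$ if $\alpha>1$, satisfies $\pi_{\mathcal X}(F_{\mathcal X},F^*_{\mathcal Y})\le L(\alpha)$ for all $F_{\mathcal X}\in\mathbb F(\boldsymbol X)$.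
   Context: Contests $\mathcal C=\{1,\dots,C\}$ with values $v_c>0$, $\sum_cv_c=1$; types $\mathcal T=\{1,\dots,T\}$; $\Delta(\mathcal T)$ is the set of probability vectors on $\mathcal T$. $\mathbb F(\boldsymbol X)$ is the set of probability distributions $F$ on $\mathbb R^{CT}_{\ge0}$ (points $\mathbf x=(\boldsymbol x_c)_c$, $\boldsymbol x_c=(x_{c,t})_t$) with $\mathbb E_{\mathbf x\sim F}[\sum_cx_{c,t}]\le X_t$ for all $t$; similarly $\mathbb F(\boldsymbol Y)$. $c$-marginal: $F_c(\boldsymbol u)=\mathbb P_{\mathbf x\sim F}[x_{c,t}\le u_t\ \forall t]$. Weakest-link rule $W_{\mathrm{WL}}(\boldsymbol x,\boldsymbol y)=\mathbf 1\{x_t\ge y_t\ \forall t\}$; $\pi_{\mathcal X}(F_{\mathcal X},F_{\mathcal Y})=\mathbb E[\sum_cv_cW_{\mathrm{WL}}(\boldsymbol x_c,\boldsymbol y_c)]$ with independent $\mathbf x\sim F_{\mathcal X}$, $\mathbf y\sim F_{\mathcal Y}$. $L(\alpha)=1-\alpha/2$ for $\alpha\le1$, $L(\alpha)=1/(2\alpha)$ for $\alpha>1$. *)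

(* Defs.v *)
From HB Require Import structures.
From mathcomp Require Import all_boot all_order all_algebra.
From mathcomp Require Import all_classical all_reals all_analysis.
Set Implicit Arguments. Unset Strict Implicit. Unset Printing Implicit Defensive.
Import Order.TTheory GRing.Theory Num.Theory.
Local Open Scope classical_set_scope.
Local Open Scope ring_scope.

Definition L_alpha (R : realType) (a : R) : R :=
  if a <= 1 then 1 - a / 2 else 1 / (2 * a).

Definition alpha_of (R : realType) (T : nat) (X Y : 'I_T -> R) : R :=
  \sum_(t < T) Y t / X t.

Definition UB (R : realType) (T : nat) (X Y : 'I_T -> R) (delta : R)
  (p : 'I_T -> R) : R :=
  1 - delta + delta ^+ 2 / 2 * \sum_(t < T) p t ^+ 2 * X t / Y t.

Definition is_prob_vec (R : realType) (T : nat) (p : 'I_T -> R) : Prop :=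
  (forall t, 0 <= p t) /\ \sum_(t < T) p t = 1.

Definition Fstar_marg (R : realType) (C T : nat) (v : 'I_C -> R)
  (X Y : 'I_T -> R) (c : 'I_C) (u : 'I_T -> R) : R :=
  let a := alpha_of X Y in
  if a <= 1 then
    1 - a + a * \sum_(t < T) ((Y t / X t) / a) * Num.min (u t / (2 * v c * X t)) 1
  else
    \sum_(t < T) ((Y t / X t) / a) * Num.min (u t / (2 * v c * X t * a)) 1.

(* A mixed strategy F in F(B) is represented as the law of a random vector
   x = (x_{c,t}) : Omega -> R^{C x T}_{>=0} on a probability space (Omega, P):
   each coordinate measurable, nonnegative, and E[sum_c x_{c,t}] <= B_t. *)
Definition strategy_in (R : realType) (C T : nat) d (Om : measurableType d)
  (P : probability Om R) (x : 'I_C -> 'I_T -> Om -> R) (B : 'I_T -> R) : Prop :=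
  (forall c t, measurable_fun setT (x c t)) /\
  (forall c t w, 0 <= x c t w) /\
  (forall t, (\int[P]_w (\sum_(c < C) x c t w)%:E <= (B t)%:E)%E).

Definition marg_cdf (R : realType) (C T : nat) d (Om : measurableType d)
  (P : probability Om R) (x : 'I_C -> 'I_T -> Om -> R) (c : 'I_C)
  (u : 'I_T -> R) : \bar R :=
  P [set w | forall t, x c t w <= u t].

(* pi_X(F_X, F_Y) = E[ sum_c v_c W_WL(x_c, y_c) ] with x, y independent,
   i.e. sum_c v_c (P x Q)[x_{c,t} >= y_{c,t} for all t] *)
Definition payoffX (R : realType) (C T : nat) (v : 'I_C -> R)
  d1 (Om1 : measurableType d1) (P : probability Om1 R)
  (x : 'I_C -> 'I_T -> Om1 -> R)
  d2 (Om2 : measurableType d2) (Q : probability Om2 R)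
  (y : 'I_C -> 'I_T -> Om2 -> R) : \bar R :=
  (\sum_(c < C) (v c)%:E *
     (P \x Q) [set z | forall t, (y c t z.2 <= x c t z.1)%R])%E.

(* Main.v *)
Require Import Defs.
From HB Require Import structures.
From mathcomp Require Import all_boot all_order all_algebra.
From mathcomp Require Import all_classical all_reals all_analysis.
From mathcomp Require Import measurable_realfun.
From mathcomp Require Import ring lra.
Import Order.TTheory GRing.Theory Num.Theory.
Local Open Scope classical_set_scope.
Local Open Scope ring_scope.
Set Implicit Arguments. Unset Strict Implicit.
Lemma alpha_gt0 (R : realType) (T : nat) (X Y : 'I_T -> R) :
  (0 < T)%N -> (forall t, 0 < X t) -> (forall t, 0 < Y t) ->
  0 < alpha_of X Y.
Proof.
move=> HT HX HY; rewrite /alpha_of (bigD1 (Ordinal HT)) //=.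
apply: ltr_pwDl; first by rewrite divr_gt0.
by apply: sumr_ge0 => i _; rewrite ltW // divr_gt0.
Qed.
Lemma part1 (R : realType) (T : nat) (X Y : 'I_T -> R) :
  (0 < T)%N ->
  (forall t, 0 < X t) -> (forall t, 0 < Y t) ->
  let alph := alpha_of X Y in
  let pstar := fun t => (Y t / X t) / alph in
  (is_prob_vec pstar /\ 0 <= Num.min alph 1 <= 1 /\
   UB X Y (Num.min alph 1) pstar = L_alpha alph /\
   (forall (delta : R) (p : 'I_T -> R), 0 <= delta <= 1 -> is_prob_vec p ->
      L_alpha alph <= UB X Y delta p)).
Proof.
move=> HT HX HY alph pstar.
have a0 : 0 < alph by exact: alpha_gt0.
have an0 : alph != 0 by rewrite gt_eqF.
have Xn0 t : X t != 0 by rewrite gt_eqF.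
have Yn0 t : Y t != 0 by rewrite gt_eqF.
have sq : \sum_(t < T) (Y t / X t) / alph = 1.
  by rewrite -mulr_suml divff.
have pp : is_prob_vec pstar.
  split => // t; rewrite /pstar divr_ge0 ?ltW // divr_gt0 //.
have sstar : \sum_(t < T) pstar t ^+ 2 * X t / Y t = 1 / alph.
  transitivity (\sum_(t < T) (Y t / X t) / alph * (1 / alph)).
    apply: eq_bigr => t _; rewrite /pstar; field.
    by rewrite Xn0 Yn0 an0.
  by rewrite -mulr_suml sq mul1r.
split=> //; split.
  rewrite le_min ge_min lexx orbT andbT; apply/andP; split => //; exact: ltW.
split.
  rewrite /UB sstar /L_alpha; case: ifP => ha.
    rewrite (min_idPl ha); field; exact: an0.
  have : 1 <= alph by rewrite ltW // ltNge ha.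
  move/min_idPr => ->; field; exact: an0.
move=> delta p /andP[d0 d1] [p0 p1].
set s := \sum_(t < T) p t ^+ 2 * X t / Y t.
have hs : 1 / alph <= s.
  have h0 : 0 <= \sum_(t < T) (p t - pstar t) ^+ 2 * X t / Y t.
    apply: sumr_ge0 => t _; apply: divr_ge0; [apply: mulr_ge0; [exact: sqr_ge0|exact: ltW]|exact: ltW].
  have e : \sum_(t < T) (p t - pstar t) ^+ 2 * X t / Y t =
      s - 2 / alph * \sum_(t < T) p t + 1 / alph * \sum_(t < T) pstar t.
    rewrite /s !mulr_sumr -sumrB -big_split /=; apply: eq_bigr => t _.
    rewrite /pstar; field; by rewrite Xn0 Yn0 an0.
  move: h0; rewrite e p1 sq; lra.
set r := 1 / alph in hs *.
have r0 : 0 < r by rewrite /r divr_gt0.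
have ar : alph * r = 1 by rewrite /r mulrC divfK.
rewrite /UB -/s /L_alpha; case: ifP => ha.
  have h1 := mulr_ge0 (sqr_ge0 (delta - alph)) (ltW r0).
  have h2 := mulr_ge0 (sqr_ge0 delta) (ltW r0).
  nra.
have ha' : 1 < alph by rewrite ltNge ha.
have rl : r < 1 by nra.
have e : 1 / (2 * alph) = r / 2 by rewrite /r; field.
rewrite e.
have h1 : 0 <= (1 - delta) * (2 - (1 + delta) * r).
  apply: mulr_ge0; nra.
have h2 : 0 <= delta ^+ 2 * (s - r) by apply: mulr_ge0; [exact: sqr_ge0|lra].
nra.
Qed.
Definition acoef (R : realType) (T : nat) (X Y : 'I_T -> R) : R :=
  if alpha_of X Y <= 1 then 1 - alpha_of X Y else 0.
Definition kcoef (R : realType) (T : nat) (X Y : 'I_T -> R) (t : 'I_T) : R :=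
  if alpha_of X Y <= 1 then Y t / (2 * X t * X t)
  else Y t / (2 * X t * X t * alpha_of X Y * alpha_of X Y).

Lemma Fstar_bound (R : realType) (C T : nat) (v : 'I_C -> R) (X Y : 'I_T -> R)
  (c : 'I_C) (u : 'I_T -> R) :
  (0 < T)%N -> (forall c, 0 < v c) ->
  (forall t, 0 < X t) -> (forall t, 0 < Y t) -> (forall t, 0 <= u t) ->
  Fstar_marg v X Y c u <= acoef X Y + \sum_(t < T) kcoef X Y t / v c * u t.
Proof.
move=> HT Hv HX HY Hu.
have a0 := alpha_gt0 HT HX HY.
have an0 : alpha_of X Y != 0 by rewrite gt_eqF.
have Xn0 t : X t != 0 by rewrite gt_eqF.
have vn0 : v c != 0 by rewrite gt_eqF.
rewrite /Fstar_marg /acoef /kcoef /=; case: ifP => ha.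
  apply: lerD => //; rewrite mulr_sumr; apply: ler_sum => t _.
  rewrite mulrA.
  apply: (@le_trans _ _ (alpha_of X Y * (Y t / X t / alpha_of X Y) * (u t / (2 * v c * X t)))).
    apply: ler_wpM2l.
      by apply: mulr_ge0; [exact: ltW|rewrite !divr_ge0 ?ltW].
    by rewrite ge_min lexx.
  rewrite le_eqVlt; apply/orP; left; apply/eqP; field; by rewrite an0 Xn0 vn0.
rewrite add0r; apply: ler_sum => t _.
apply: (@le_trans _ _ ((Y t / X t / alpha_of X Y) * (u t / (2 * v c * X t * alpha_of X Y)))).
  apply: ler_wpM2l; first by rewrite !divr_ge0 ?ltW.
  by rewrite ge_min lexx.
rewrite le_eqVlt; apply/orP; left; apply/eqP; field; by rewrite an0 Xn0 vn0.
Qed.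

Lemma coef_sum (R : realType) (T : nat) (X Y : 'I_T -> R) :
  (0 < T)%N -> (forall t, 0 < X t) -> (forall t, 0 < Y t) ->
  acoef X Y + \sum_(t < T) kcoef X Y t * X t = L_alpha (alpha_of X Y).
Proof.
move=> HT HX HY.
have a0 := alpha_gt0 HT HX HY.
have an0 : alpha_of X Y != 0 by rewrite gt_eqF.
have Xn0 t : X t != 0 by rewrite gt_eqF.
rewrite /acoef /kcoef /L_alpha; case: ifP => ha.
  transitivity (1 - alpha_of X Y + alpha_of X Y / 2); last by field.
  congr (_ + _); rewrite /alpha_of mulr_suml; apply: eq_bigr => t _.
  by field; rewrite Xn0.
transitivity (0 + (\sum_(t < T) Y t / X t) / (2 * alpha_of X Y * alpha_of X Y)).
  congr (_ + _); rewrite mulr_suml; apply: eq_bigr => t _.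
  by field; rewrite Xn0 an0.
rewrite -/(alpha_of X Y); by field.
Qed.

Lemma coef_ge0 (R : realType) (T : nat) (X Y : 'I_T -> R) :
  (0 < T)%N -> (forall t, 0 < X t) -> (forall t, 0 < Y t) ->
  0 <= acoef X Y /\ forall t, 0 <= kcoef X Y t.
Proof.
move=> HT HX HY; rewrite /acoef /kcoef; case: ifP => ha; split => //.
- by rewrite subr_ge0.
- move=> t; rewrite divr_ge0 ?ltW // !mulr_gt0 //.
- move=> t; have a0 := alpha_gt0 HT HX HY.
  by rewrite divr_ge0 ?ltW // !mulr_gt0.
Qed.

Lemma Fstar_meas (R : realType) (C T : nat) (v : 'I_C -> R) (X Y : 'I_T -> R)
  d1 (Om1 : measurableType d1) (x : 'I_C -> 'I_T -> Om1 -> R) (c : 'I_C) :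
  (forall t, measurable_fun setT (x c t)) ->
  measurable_fun setT (fun w => Fstar_marg v X Y c (fun t => x c t w)).
Proof.
move=> mx; rewrite /Fstar_marg /=; case: (alpha_of X Y <= 1).
  exact (measurable_funD (measurable_cst _) (measurable_funM (measurable_cst _)
    (measurable_sum _ (fun t => measurable_funM (measurable_cst _)
      (measurable_minr (measurable_funM (mx t) (measurable_cst _)) (measurable_cst _)))))).
exact (measurable_sum _ (fun t => measurable_funM (measurable_cst _)
      (measurable_minr (measurable_funM (mx t) (measurable_cst _)) (measurable_cst _)))).
Qed.

Lemma part2 (R : realType) (C T : nat) (v : 'I_C -> R) (X Y : 'I_T -> R) :
  (0 < T)%N ->
  (forall c, 0 < v c) -> \sum_(c < C) v c = 1 ->
  (forall t, 0 < X t) -> (forall t, 0 < Y t) ->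
  (forall d2 (Om2 : measurableType d2) (Q : probability Om2 R)
          (y : 'I_C -> 'I_T -> Om2 -> R),
     strategy_in Q y Y ->
     (forall c (u : 'I_T -> R), (forall t, 0 <= u t) ->
        marg_cdf Q y c u = (Fstar_marg v X Y c u)%:E) ->
     forall d1 (Om1 : measurableType d1) (P : probability Om1 R)
            (x : 'I_C -> 'I_T -> Om1 -> R),
       strategy_in P x X ->
       (payoffX v P x Q y <= (L_alpha (alpha_of X Y))%:E)%E).
Proof.
move=> HT Hv Hv1 HX HY d2 Om2 Q y _ Hmarg d1 Om1 P x [mx [x0 xB]].
have [a0 k0] := coef_ge0 HT HX HY.
set a := acoef X Y in a0 *; set k := kcoef X Y in k0 *.
pose f c w := Fstar_marg v X Y c (fun t => x c t w).
pose g c w := a + \sum_(t < T) k t / v c * x c t w.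
pose S t w := \sum_(c < C) x c t w.
have Hsec c (w : Om1) : (Q (xsection [set z : Om1 * Om2 | forall t, (y c t z.2 <= x c t z.1)%R] w)
    = (f c w)%:E)%E.
  rewrite -Hmarg //; congr (Q _); rewrite /xsection; apply/seteqP; split => z /=;
    by rewrite in_setE.
have f0 c w : 0 <= f c w.
  by rewrite -lee_fin -Hsec measure_ge0.
have mf c : measurable_fun setT (f c) by exact: Fstar_meas.
have fg c w : f c w <= g c w.
  exact: Fstar_bound.
have mS t : measurable_fun setT (S t).
  exact: (measurable_sum _ (fun c => mx c t)).
have S0 t w : 0 <= S t w by apply: sumr_ge0.
have mg c : measurable_fun setT (g c).
  exact: (measurable_funD (measurable_cst _) (measurable_sum _
    (fun t => measurable_funM (measurable_cst _) (mx c t)))).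
have g0 c w : 0 <= g c w.
  apply: addr_ge0 => //; apply: sumr_ge0 => t _.
  by rewrite mulr_ge0 // divr_ge0 // ltW.
have mSk : measurable_fun setT (fun w => \sum_(t < T) k t * S t w).
  exact: (measurable_sum _ (fun t => measurable_funM (measurable_cst _) (mS t))).
have Sk0 w : 0 <= \sum_(t < T) k t * S t w.
  by apply: sumr_ge0 => t _; rewrite mulr_ge0.
have Hid w : \sum_(c < C) v c * g c w = a + \sum_(t < T) k t * S t w.
  rewrite /g /S; under eq_bigr => c _ do rewrite mulrDr mulr_sumr.
  rewrite big_split /= -mulr_suml Hv1 mul1r; congr (_ + _).
  rewrite exchange_big /=; apply: eq_bigr => t _; rewrite mulr_sumr.
  apply: eq_bigr => c _; field; by rewrite gt_eqF.
rewrite /payoffX -coef_sum // -/a.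
apply: (@le_trans _ _ (\sum_(c < C) (v c)%:E * \int[P]_w (g c w)%:E)%E).
  apply: lee_sum => c _; apply: lee_wpmul2l; first by rewrite lee_fin ltW.
  rewrite /product_measure1 /=.
  under eq_integral => w _ do rewrite /= Hsec.
  apply: ge0_le_integral => //.
  - by move=> w _; rewrite lee_fin.
  - exact/measurable_EFinP.
  - exact/measurable_EFinP.
  - by move=> w _; rewrite lee_fin.
have E1 : (\sum_(c < C) (v c)%:E * \int[P]_w (g c w)%:E =
    \sum_(c < C) \int[P]_w (v c * g c w)%:E)%E.
  apply: eq_bigr => c _; rewrite -ge0_integralZl_EFin //.
  - by move=> w _; rewrite lee_fin.
  - exact/measurable_EFinP.
  - by rewrite ltW.
have E2 : (\int[P]_w (\sum_(c < C) (v c * g c w)%:E) =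
    \sum_(c < C) \int[P]_w (v c * g c w)%:E)%E.
  apply: ge0_integral_sum => //.
  - move=> c; apply/measurable_EFinP.
    exact: (measurable_funM (measurable_cst _) (mg c)).
  - by move=> c w _; rewrite lee_fin mulr_ge0 // ltW.
have E3 : (\int[P]_w (\sum_(c < C) (v c * g c w)%:E) =
    \int[P]_w (a + \sum_(t < T) k t * S t w)%:E)%E.
  by apply: eq_integral => w _; rewrite sumEFin Hid.
have E4 : (\int[P]_w (a + \sum_(t < T) k t * S t w)%:E =
    a%:E + \sum_(t < T) (k t)%:E * \int[P]_w (S t w)%:E)%E.
  rewrite (_ : (fun w => (a + \sum_(t < T) k t * S t w)%:E) =
     (fun w => a%:E + \sum_(t < T) (k t * S t w)%:E)%E); last first.
    by apply: funext => w; rewrite sumEFin.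
  rewrite ge0_integralD //.
  - rewrite integral_cst // [X in (a%:E * X)%E](_ : _ = 1%E) ?mule1; last exact: probability_setT. congr (_ + _)%E.
    rewrite ge0_integral_sum //.
    + apply: eq_bigr => t _; rewrite -ge0_integralZl_EFin //.
      * by move=> w _; rewrite lee_fin.
      * exact/measurable_EFinP.
    + by move=> t; apply/measurable_EFinP; exact: (measurable_funM (measurable_cst _) (mS t)).
    + by move=> t w _; rewrite lee_fin mulr_ge0.
  - by move=> w _; rewrite sumEFin lee_fin.
  - rewrite (_ : (fun w => \sum_(t < T) (k t * S t w)%:E)%E = (fun w => (\sum_(t < T) k t * S t w)%:E)); last first.
      by apply: funext => w; rewrite sumEFin.
    exact/measurable_EFinP.
rewrite E1 -E2 E3 E4 EFinD -sumEFin; apply: leeD2l; apply: lee_sum => t _.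
by rewrite EFinM; apply: lee_wpmul2l; rewrite ?lee_fin // xB.
Qed.
Unset Implicit Arguments.

Theorem lemma4 (R : realType) (C T : nat) (v : 'I_C -> R) (X Y : 'I_T -> R) :
  (0 < T)%N ->
  (forall c, 0 < v c) -> \sum_(c < C) v c = 1 ->
  (forall t, 0 < X t) -> (forall t, 0 < Y t) ->
  let alph := alpha_of X Y in
  let pstar := fun t => (Y t / X t) / alph in
  (* min of UB over [0,1] x Delta(T) equals L(alpha), attained at the given point *)
  (is_prob_vec pstar /\ 0 <= Num.min alph 1 <= 1 /\
   UB X Y (Num.min alph 1) pstar = L_alpha alph /\
   (forall (delta : R) (p : 'I_T -> R), 0 <= delta <= 1 -> is_prob_vec p ->
      L_alpha alph <= UB X Y delta p)) /\
  (* the equilibrium strategy of Y guarantees pi_X <= L(alpha) *)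
  (forall d2 (Om2 : measurableType d2) (Q : probability Om2 R)
          (y : 'I_C -> 'I_T -> Om2 -> R),
     strategy_in Q y Y ->
     (forall c (u : 'I_T -> R), (forall t, 0 <= u t) ->
        marg_cdf Q y c u = (Fstar_marg v X Y c u)%:E) ->
     forall d1 (Om1 : measurableType d1) (P : probability Om1 R)
            (x : 'I_C -> 'I_T -> Om1 -> R),
       strategy_in P x X ->
       (payoffX v P x Q y <= (L_alpha alph)%:E)%E).
Proof.
move=> HT Hv Hv1 HX HY alph pstar; split.
  exact: part1.
exact: part2.
Qed.
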